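(* Let $N,d\ge1$, $\lambda,\tau>0$, and let $\psi:[0,\infty)\to(0,\infty)$ be positive, nonincreasing, differentiable with $\psi(r)\le1$ for all $r\ge0$. Let $(x_i,v_i)_{i=1}^N$ solve $$\dot x_i(t)=v_i(t),\qquad \dot v_i(t)=\frac{\lambda}{N}\sum_{j=1}^N\psi(|x_i(t-\tau)-x_j(t-\tau)|)\,(v_j(t-\tau)-v_i(t-\tau)),\qquad t>0,$$ with initial data $(x_i,v_i)=(x_i^0,v_i^0)$ on $[-\tau,0]$, $(x_i^0,v_i^0)\in C([-\tau,0];\mathbb{R}^{2d})\cap C^1((-\tau,0);\mathbb{R}^{2d})$. Then for any $\delta>0$, $$\frac{d}{dt}V(t)\le 2(\delta-1)\lambda\widetilde D(t)+\frac{2\tau\lambda^3}{\delta}\int_{t-\tau}^t\widetilde D(s)\,ds\qquad\text{for all } t>\tau.$$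
   Context: $V(t):=\frac12\sum_{i,j=1}^N|v_i(t)-v_j(t)|^2$, $D(t):=\frac12\sum_{i,j=1}^N\psi(|x_i(t)-x_j(t)|)\,|v_j(t)-v_i(t)|^2$, and $\widetilde D(t):=D(t-\tau)$. *)

(* Defs.v *)
From HB Require Import structures.
From mathcomp Require Import all_boot all_order all_algebra.
From mathcomp Require Import all_classical all_reals all_analysis.
Set Implicit Arguments. Unset Strict Implicit. Unset Printing Implicit Defensive.
Import Order.TTheory GRing.Theory Num.Theory.
Import numFieldNormedType.Exports.
Local Open Scope ring_scope.
Local Open Scope classical_set_scope.

(* Positions/velocities are given componentwise: x i k t is the k-th
   coordinate of x_i(t) in R^d. *)

Definition sqdist {R : realType} {d : nat} (a b : 'I_d -> R) : R :=
  \sum_(k < d) (a k - b k) ^+ 2.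

Definition eucl_dist {R : realType} {d : nat} (a b : 'I_d -> R) : R :=
  Num.sqrt (sqdist a b).

Definition Vfun {R : realType} {N d : nat} (v : 'I_N -> 'I_d -> R -> R) (t : R) : R :=
  2^-1 * \sum_(i < N) \sum_(j < N) sqdist (fun k => v i k t) (fun k => v j k t).

Definition Dfun {R : realType} {N d : nat} (psi : R -> R)
  (x v : 'I_N -> 'I_d -> R -> R) (t : R) : R :=
  2^-1 * \sum_(i < N) \sum_(j < N)
    psi (eucl_dist (fun k => x i k t) (fun k => x j k t)) *
    sqdist (fun k => v j k t) (fun k => v i k t).

Definition Dtilde {R : realType} {N d : nat} (psi : R -> R)
  (x v : 'I_N -> 'I_d -> R -> R) (tau t : R) : R :=
  Dfun psi x v (t - tau).

(* Main.v *)
Require Import Defs.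
From HB Require Import structures.
From mathcomp Require Import all_boot all_order all_algebra.
From mathcomp Require Import all_classical all_reals all_analysis.
From mathcomp.algebra_tactics Require Import ring lra.
Import Order.TTheory GRing.Theory Num.Theory.
Import numFieldNormedType.Exports.
Local Open Scope ring_scope.
Local Open Scope classical_set_scope.
Section Helpers.
Variable R : realType.

Lemma cont_sum (I : Type) (r : seq I) (f : I -> R -> R) (x : R) :
  (forall i, f i y @[y --> x] --> f i x) ->
  (\sum_(i <- r) f i y) @[y --> x] --> \sum_(i <- r) f i x.
Proof.
move=> cf; elim: r => [|a r IH].
  under eq_fun do rewrite big_nil.
  rewrite big_nil; exact: cvg_cst.
under eq_fun do rewrite big_cons.
rewrite big_cons; exact: cvgD.
Qed.

Lemma psi_cont (psi : R -> R) :
  (forall r, 0 < r -> derivable psi r 1) ->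
  cvg ((fun h : R => h^-1 * (psi h - psi 0)) @ 0^'+) ->
  continuous (fun z : R => psi `|z|).
Proof.
move=> dpsi cq z.
have h2 : {for z, continuous (fun z : R => `|z|)} by exact: norm_continuous.
have [z0|z0|z0] := ltrgt0P z.
- have h1 : {for `|z|, continuous psi}.
    apply: differentiable_continuous; apply/derivable1_diffP; apply: dpsi.
    by rewrite normr_gt0; apply/eqP => z00; move: z0; rewrite z00 ltxx.
  exact: (continuous_comp h2 h1).
- have h1 : {for `|z|, continuous psi}.
    apply: differentiable_continuous; apply/derivable1_diffP; apply: dpsi.
    by rewrite normr_gt0; apply/eqP => z00; move: z0; rewrite z00 ltxx.
  exact: (continuous_comp h2 h1).
subst z.
have hr : psi h @[h --> (0:R)^'+] --> psi 0.
  have e : {near (0:R)^'+, (fun h => psi 0 + h * (h^-1 * (psi h - psi 0))) =1 psi}.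
    near=> h; rewrite mulrA mulfV; first by rewrite mul1r addrC subrK.
    apply: lt0r_neq0. near: h. exact: nbhs_right_gt.
  apply: cvg_trans; first exact: (near_eq_cvg e).
  have H : x * (x^-1 * (psi x - psi 0)) @[x --> (0:R)^'+] --> 0.
    have c1 : x @[x --> (0:R)^'+] --> (0:R) by apply: cvg_at_right_filter; exact: cvg_id.
    have := cvgM c1 cq; rewrite mul0r => HH; apply: HH; exact: Proper_filter.
  have := cvgD (cvg_cst (psi 0)) H; rewrite addr0 => HH; apply: HH; exact: Proper_filter.
rewrite /prop_for /continuous_at normr0.
apply/cvgrPdist_lt => e e0.
move/cvgrPdist_lt: hr => /(_ e e0) /nbhs_ballP [del del0 Hd].
apply/nbhs_ballP; exists del => // z Bz.
have [->|zn0] := eqVneq z 0; first by rewrite normr0 subrr normr0.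
apply: Hd; last by rewrite normr_gt0.
move: Bz; rewrite /ball /= !sub0r !normrN normr_id //.
Unshelve. all: by end_near.
Qed.

End Helpers.
Section Int.
Variable R : realType.
Notation mu := (@lebesgue_measure R).

Definition pcont (s t : R) (g : R -> R) :=
  forall r, s <= r <= t -> g x @[x --> r] --> g r.

Lemma pcont_int s t g : pcont s t g -> mu.-integrable `[s, t] (EFin \o g).
Proof.
move=> cg; apply: continuous_compact_integrable; first exact: segment_compact.
apply: continuous_in_subspaceT => r; rewrite inE /= in_itv /= => hr.
exact: cg.
Qed.

Lemma Rint_sum (I : Type) (l : seq I) (s t : R) (f : I -> R -> R) :
  (forall i, pcont s t (f i)) ->
  \int[mu]_(x in `[s, t]) (\sum_(i <- l) f i x) =
  \sum_(i <- l) \int[mu]_(x in `[s, t]) f i x.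
Proof.
move=> cf; elim: l => [|a l IH].
  under eq_Rintegral do rewrite big_nil.
  by rewrite big_nil Rintegral_cst // mul0r.
under eq_Rintegral do rewrite big_cons.
rewrite big_cons RintegralD //; first by rewrite IH.
- exact: pcont_int.
- apply: pcont_int => r hr; apply: cont_sum => i; exact: cf.
Qed.

End Int.
Arguments pcont {R}.
Section CS.
Variable R : realType.
Notation mu := (@lebesgue_measure R).

Lemma int_cs (F : R -> R) (s t : R) : s < t ->
  (forall r, s <= r <= t -> derivable F r 1) ->
  pcont s t F^`() ->
  (F t - F s)^+2 <= (t - s) * \int[mu]_(r in `[s, t]) (derive1 F r)^+2.
Proof.
move=> st dF cf.
set f := derive1 F.
have Fc : forall r, s <= r <= t -> F x @[x --> r] --> F r.
  move=> r hr; apply: differentiable_continuous; apply/derivable1_diffP; exact: dF.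
have ftc : \int[mu]_(r in `[s, t]) f r = F t - F s.
  rewrite /Rintegral (@continuous_FTC2 _ f F s t st) //.
  - apply: continuous_in_subspaceT => r; rewrite inE /= in_itv /= => hr; exact: cf.
  - split.
    + move=> r; rewrite in_itv /= => /andP[h1 h2]; apply: dF.
      by rewrite (ltW h1) (ltW h2).
    + apply: cvg_at_right_filter; apply: Fc; by rewrite lexx (ltW st).
    + apply: cvg_at_left_filter; apply: Fc; by rewrite lexx (ltW st).
set c := (F t - F s) / (t - s).
have L0 : 0 < t - s by rewrite subr_gt0.
have H0 : 0 <= \int[mu]_(r in `[s, t]) (f r - c)^+2.
  by apply: Rintegral_ge0 => r _; exact: sqr_ge0.
have E : \int[mu]_(r in `[s, t]) (f r - c)^+2 =
   \int[mu]_(r in `[s, t]) (f r)^+2 - (2 * c * (F t - F s) - c^+2 * (t - s)).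
  rewrite (@eq_Rintegral _ _ _ mu _ (fun r => (f r)^+2 - (2 * c * f r - c^+2))); last first.
    by move=> r _; rewrite sqrrB; ring.
  rewrite RintegralB //; last first.
  - apply: pcont_int => r hr; apply: cvgB; [apply: cvgM; [exact: cvg_cst|exact: cf]|exact: cvg_cst].
  - apply: pcont_int => r hr; rewrite expr2; apply: cvgM; exact: cf.
  rewrite RintegralB //; last first.
  - apply: pcont_int => r hr; exact: cvg_cst.
  - apply: pcont_int => r hr; apply: cvgM; [exact: cvg_cst|exact: cf].
  rewrite RintegralZl //; last exact: pcont_int.
  rewrite ftc Rintegral_cst //.
  have -> : fine (mu `[s, t]) = t - s.
    by rewrite (lebesgue_measure_itv `[s, t]%R) /= lte_fin st /=.
  by [].
rewrite E in H0.
have Hc : 2 * c * (F t - F s) - c^+2 * (t - s) = (F t - F s)^+2 / (t - s).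
  rewrite /c; field; exact: lt0r_neq0.
rewrite Hc subr_ge0 in H0.
have -> : (F t - F s)^+2 = (t - s) * ((F t - F s)^+2 / (t - s)).
  by field; exact: lt0r_neq0.
apply: ler_wpM2l; first exact: ltW.
exact: H0.
Qed.
End CS.
Section Alg.
Variable R : realFieldType.

Lemma antisym0 n (a : 'I_n -> 'I_n -> R) :
  (forall i j, a i j = - a j i) -> \sum_i \sum_j a i j = 0.
Proof.
move=> h.
have e : \sum_i \sum_j a i j = - \sum_i \sum_j a i j.
  rewrite [LHS]exchange_big /= -sumrN; apply: eq_bigr => j _.
  rewrite -sumrN; apply: eq_bigr => i _; exact: h.
set X := \sum_i \sum_j a i j in e *.
have : 2 * X = 0 by lra.
by move/eqP; rewrite mulf_eq0 pnatr_eq0 orFb => /eqP.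
Qed.

Lemma sq_sum_le n (a : 'I_n -> R) :
  (\sum_j a j)^+2 <= n%:R * \sum_j (a j)^+2.
Proof.
set S := \sum_j a j; set Q := \sum_j (a j)^+2.
have e : forall i, \sum_(j < n) (a i - a j)^+2 = (a i)^+2 *+ n - 2 * a i * S + Q.
  move=> i.
  rewrite (eq_bigr (fun j => ((a i)^+2 - 2 * a i * a j) + (a j)^+2)); last first.
    by move=> j _; rewrite sqrrB; ring.
  rewrite big_split /= sumrB sumr_const card_ord -mulr_sumr //.
have e2 : \sum_(i < n) \sum_(j < n) (a i - a j)^+2 = (n%:R * Q - S^+2) *+ 2.
  rewrite (eq_bigr _ (fun i _ => e i)).
  rewrite big_split /= sumrB sumr_const card_ord -sumrMnl -/Q -mulr_suml -mulr_sumr -/S.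
  have -> : \sum_(i < n) (a i ^+ 2 *+ n) = n%:R * Q by rewrite sumrMnl mulr_natl.
  rewrite mulr2n; ring.
have : 0 <= \sum_(i < n) \sum_(j < n) (a i - a j)^+2.
  by apply: sumr_ge0 => i _; apply: sumr_ge0 => j _; exact: sqr_ge0.
by rewrite e2 pmulrn_lge0 // subr_ge0.
Qed.

End Alg.
Section Alg2.
Variable R : realFieldType.

Lemma boundB n d (lam : R) (P : 'I_n -> 'I_n -> R) (u : 'I_n -> 'I_d -> R) :
  (0 < n)%N -> (forall i j, 0 <= P i j <= 1) ->
  \sum_i \sum_k (lam / n%:R * \sum_j P i j * (u j k - u i k))^+2 <=
  2 * lam^+2 / n%:R * (2^-1 * \sum_i \sum_j P i j * \sum_k (u j k - u i k)^+2).
Proof.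
move=> n0 hP.
have n0' : 0 < n%:R :> R by rewrite ltr0n.
apply: (@le_trans _ _ (\sum_i \sum_k lam^+2 / n%:R * \sum_j P i j * (u j k - u i k)^+2)).
  apply: ler_sum => i _; apply: ler_sum => k _.
  rewrite exprMn.
  apply: le_trans; first apply: ler_wpM2l; [exact: sqr_ge0| exact: sq_sum_le|].
  have -> : (lam / n%:R)^+2 * (n%:R * \sum_j (P i j * (u j k - u i k))^+2)
     = lam^+2 / n%:R * \sum_j (P i j * (u j k - u i k))^+2.
    by field; exact: lt0r_neq0.
  apply: ler_wpM2l; first by apply: divr_ge0; [exact: sqr_ge0|exact: ltW].
  apply: ler_sum => j _.
  have /andP[p0 p1] := hP i j.
  rewrite exprMn expr2 -mulrA ler_wpM2l //.
  rewrite -[X in _ <= X]mul1r ler_wpM2r //; exact: sqr_ge0.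
have -> : 2 * lam ^+ 2 / n%:R *
  (2^-1 * \sum_i \sum_j P i j * \sum_k (u j k - u i k) ^+ 2) =
  lam ^+ 2 / n%:R * (\sum_i \sum_j P i j * \sum_k (u j k - u i k) ^+ 2).
  by field; exact: lt0r_neq0.
under eq_bigr do rewrite -mulr_sumr.
rewrite -mulr_sumr.
apply: ler_wpM2l; first by apply: divr_ge0; [exact: sqr_ge0|exact: ltW].
have -> : \sum_i \sum_k \sum_j P i j * (u j k - u i k)^+2 =
          \sum_i \sum_j P i j * \sum_k (u j k - u i k)^+2.
  apply: eq_bigr => i _; rewrite exchange_big /=; apply: eq_bigr => j _.
  by rewrite mulr_sumr.
by [].
Qed.
End Alg2.
Section Alg3.
Variable R : realFieldType.

Lemma young (P d e del : R) : 0 <= P <= 1 -> 0 < del ->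
  P * d * e <= del / 2 * (P * d^+2) + e^+2 / (2 * del).
Proof.
move=> /andP[p0 p1] del0.
rewrite -subr_ge0.
have -> : del / 2 * (P * d^+2) + e^+2 / (2 * del) - P * d * e =
   (P * (del * d - e)^+2 + (1 - P) * e^+2) / (2 * del).
  by field; exact: lt0r_neq0.
apply: divr_ge0; last by apply: mulr_ge0 => //; exact: ltW.
apply: addr_ge0; apply: mulr_ge0 => //; try exact: sqr_ge0.
by rewrite subr_ge0.
Qed.

Lemma boundA n d (lam del : R) (P : 'I_n -> 'I_n -> R) (u w g : 'I_n -> 'I_d -> R) :
  (0 < n)%N -> 0 < lam -> 0 < del ->
  (forall i j, 0 <= P i j <= 1) -> (forall i j, P i j = P j i) ->
  (forall i k, g i k = lam / n%:R * \sum_j P i j * (u j k - u i k)) ->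
  \sum_i \sum_j \sum_k (w i k - w j k) * (g i k - g j k) <=
  2 * (del - 1) * lam * (2^-1 * \sum_i \sum_j P i j * \sum_k (u j k - u i k)^+2)
  + lam * n%:R / del * \sum_i \sum_k (w i k - u i k)^+2.
Proof.
move=> n0 lam0 del0 hP Psym hg.
have n0' : 0 < n%:R :> R by rewrite ltr0n.
pose F i j := \sum_k (w i k - w j k) * g i k.
have S1 : \sum_i \sum_j \sum_k (w i k - w j k) * (g i k - g j k) =
          2 * \sum_i \sum_j F i j.
  transitivity (\sum_i \sum_j (F i j + F j i)).
    apply: eq_bigr => i _; apply: eq_bigr => j _.
    rewrite /F -big_split /=; apply: eq_bigr => k _; ring.
  under eq_bigr do rewrite big_split /=.
  rewrite big_split /= [X in _ + X = _]exchange_big /=; ring.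
have G0 : forall k, \sum_i g i k = 0.
  move=> k; under eq_bigr do rewrite hg.
  rewrite -mulr_sumr antisym0 ?mulr0 // => i j.
  by rewrite Psym -mulrN opprB.
have S2 : \sum_i \sum_j F i j = n%:R * \sum_i \sum_k w i k * g i k.
  transitivity (\sum_(i < n) \sum_(j < n) \sum_(k < d) w i k * g i k - \sum_(i < n) \sum_(j < n) \sum_(k < d) w j k * g i k).
    rewrite -sumrB; apply: eq_bigr => i _; rewrite -sumrB; apply: eq_bigr => j _.
    rewrite /F -sumrB; apply: eq_bigr => k _; ring.
  have -> : \sum_(i < n) \sum_(j < n) \sum_(k < d) w j k * g i k = 0.
    rewrite exchange_big /=; apply: big1 => j _; rewrite exchange_big /=.
    apply: big1 => k _; rewrite -mulr_sumr G0 mulr0 //.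
  rewrite subr0 mulr_sumr; apply: eq_bigr => i _.
  by rewrite sumr_const card_ord mulr_natl.
set T := \sum_(i < n) \sum_(j < n) \sum_(k < d) P i j * (u j k - u i k) * w i k.
have S3 : n%:R * \sum_i \sum_k w i k * g i k = lam * T.
  rewrite /T mulr_sumr [RHS]mulr_sumr; apply: eq_bigr => i _.
  transitivity (\sum_(k < d) lam * \sum_(j < n) P i j * (u j k - u i k) * w i k).
    rewrite mulr_sumr; apply: eq_bigr => k _; rewrite hg -mulr_suml.
    by field; exact: lt0r_neq0.
  by rewrite -mulr_sumr exchange_big.
set X := \sum_i \sum_j P i j * \sum_k (u j k - u i k)^+2.
set E := \sum_i \sum_k (w i k - u i k)^+2.
have S4 : T <= (del - 1) / 2 * X + n%:R / (2 * del) * E.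
  apply: (@le_trans _ _ (\sum_(i < n) \sum_(j < n) \sum_(k < d)
     (P i j / 2 * ((u j k)^+2 - (u i k)^+2) + (del - 1) / 2 * (P i j * (u j k - u i k)^+2)
      + (w i k - u i k)^+2 / (2 * del)))).
    apply: ler_sum => i _; apply: ler_sum => j _; apply: ler_sum => k _.
    have := @young (P i j) (u j k - u i k) (w i k - u i k) del (hP i j) del0.
    move=> Y; rewrite -subr_ge0; rewrite -subr_ge0 in Y.
    apply: le_trans Y _; rewrite le_eqVlt; apply/orP; left; apply/eqP. by field; exact: lt0r_neq0.
  have split3 : forall (A B C : 'I_n -> 'I_n -> 'I_d -> R),
    \sum_(i < n) \sum_(j < n) \sum_(k < d) (A i j k + B i j k + C i j k) =
    \sum_(i < n) \sum_(j < n) \sum_(k < d) A i j k + \sum_(i < n) \sum_(j < n) \sum_(k < d) B i j k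
    + \sum_(i < n) \sum_(j < n) \sum_(k < d) C i j k.
    move=> A B C; rewrite -!big_split; apply: eq_bigr => i1 _.
    rewrite -!big_split; apply: eq_bigr => j1 _; by rewrite -!big_split.
  have e3 := (split3 (fun i j k => P i j / 2 * ((u j k)^+2 - (u i k)^+2))
    (fun i j k => (del - 1) / 2 * (P i j * (u j k - u i k)^+2))
    (fun i j k => (w i k - u i k)^+2 / (2 * del))).
  simpl in e3. rewrite e3.
  rewrite (_ : \sum_(i < n) \sum_(j < n) \sum_(k < d) P i j / 2 * ((u j k)^+2 - (u i k)^+2) = 0); last first.
    apply: antisym0 => i j; rewrite -sumrN; apply: eq_bigr => k _; rewrite Psym; ring.
  rewrite add0r; apply: lerD; rewrite le_eqVlt; apply/orP; left; apply/eqP.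
  - rewrite /X mulr_sumr; apply: eq_bigr => i _; rewrite mulr_sumr.
    by apply: eq_bigr => j _; rewrite !mulr_sumr.
  - rewrite /E mulr_sumr; apply: eq_bigr => i _.
    rewrite sumr_const card_ord -mulr_suml -mulr_natl; ring.
rewrite S1 S2 S3.
have H : 2 * (lam * T) <= 2 * lam * ((del - 1) / 2 * X + n%:R / (2 * del) * E).
  rewrite mulrA; apply: ler_wpM2l => //; apply: mulr_ge0 => //; exact: ltW.
apply: le_trans H _; rewrite le_eqVlt; apply/orP; left; apply/eqP.
by field; exact: lt0r_neq0.
Qed.
End Alg3.

Theorem lemma3p1 (R : realType) (N d : nat) (lambda tau : R) (psi : R -> R)
  (x v : 'I_N -> 'I_d -> R -> R) :
  (1 <= N)%N -> (1 <= d)%N -> 0 < lambda -> 0 < tau ->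
  (forall r, 0 <= r -> 0 < psi r /\ psi r <= 1) ->
  (forall r s, 0 <= r -> r <= s -> psi s <= psi r) ->
  (forall r, 0 < r -> derivable psi r 1) ->
  cvg ((fun h : R => h^-1 * (psi h - psi 0)) @ 0^'+) ->
  (forall i k, {within `[- tau, 0], continuous (x i k)}) ->
  (forall i k, {within `[- tau, 0], continuous (v i k)}) ->
  (forall i k (t : R), - tau < t < 0 -> derivable (x i k) t 1 /\ derivable (v i k) t 1) ->
  (forall i k, {within `]- tau, 0[, continuous (x i k)^`()}) ->
  (forall i k, {within `]- tau, 0[, continuous (v i k)^`()}) ->
  (forall i k, {within `[- tau, +oo[, continuous (x i k)}) ->
  (forall i k, {within `[- tau, +oo[, continuous (v i k)}) ->
  (forall i k (t : R), 0 < t -> is_derive t 1 (x i k) (v i k t)) ->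
  (forall i k (t : R), 0 < t ->
     is_derive t 1 (v i k)
       (lambda / N%:R * \sum_(j < N)
          psi (eucl_dist (fun l => x i l (t - tau)) (fun l => x j l (t - tau))) *
          (v j k (t - tau) - v i k (t - tau)))) ->
  forall delta : R, 0 < delta ->
  forall t : R, tau < t ->
    derivable (Vfun v) t 1 /\
    (Vfun v)^`() t <=
      2 * (delta - 1) * lambda * Dtilde psi x v tau t
      + 2 * tau * lambda ^+ 3 / delta *
        Rintegral lebesgue_measure `[t - tau, t] (Dtilde psi x v tau).
Proof.
move=> N1 _ lam0 tau0 psib _ psid psiq _ _ _ _ _ xc vc dx dv del del0 t tt.
have pc := @psi_cont R psi psid psiq.
pose P y i j := psi (eucl_dist (fun l => x i l y) (fun l => x j l y)).
pose g y i k := lambda / N%:R * \sum_(j < N) P (y - tau) i j * (v j k (y - tau) - v i k (y - tau)).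
have contx : forall i k y, - tau < y -> x i k z @[z --> y] --> x i k y.
  move=> i k y hy; have [h _] := (continuous_within_itvcyP _ _).1 (xc i k).
  by apply: h; rewrite in_itv /= hy.
have contv : forall i k y, - tau < y -> v i k z @[z --> y] --> v i k y.
  move=> i k y hy; have [h _] := (continuous_within_itvcyP _ _).1 (vc i k).
  by apply: h; rewrite in_itv /= hy.
have Pb : forall y i j, 0 <= P y i j <= 1.
  move=> y i j; have [h1 h2] := psib _ (sqrtr_ge0 (sqdist (fun l => x i l y) (fun l => x j l y))).
  by rewrite /P /eucl_dist (ltW h1) h2.
have Psym : forall y i j, P y i j = P y j i.
  move=> y i j; rewrite /P /eucl_dist /sqdist; congr (psi (Num.sqrt _)).
  by apply: eq_bigr => k _; rewrite -sqrrN opprB.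
have contP : forall i j y, - tau < y -> P z i j @[z --> y] --> P y i j.
  move=> i j y hy.
  have hsq : {for y, continuous (fun z => sqdist (fun l => x i l z) (fun l => x j l z))}.
    rewrite /sqdist; apply: cont_sum => k; rewrite expr2.
    by apply: cvgM; apply: cvgB; apply: contx.
  have hd := continuous_comp hsq (@sqrt_continuous R _).
  have H := continuous_comp hd (pc _).
  have E z : psi `|eucl_dist (fun l => x i l z) (fun l => x j l z)| = P z i j.
    by rewrite ger0_norm // /eucl_dist sqrtr_ge0.
  move: H; rewrite /prop_for /continuous_at /comp.
  under eq_fun do rewrite E.
  by rewrite E.
have Dcont : forall y, - tau < y -> Dfun psi x v z @[z --> y] --> Dfun psi x v y.
  move=> y hy; rewrite /Dfun; apply: cvgM; first exact: cvg_cst.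
  apply: cont_sum => i; apply: cont_sum => j; apply: cvgM; first exact: contP.
  rewrite /sqdist; apply: cont_sum => k; rewrite expr2.
  by apply: cvgM; apply: cvgB; apply: contv.
have shift : forall (f : R -> R) y, f z @[z --> y - tau] --> f (y - tau) ->
    f (z - tau) @[z --> y] --> f (y - tau).
  move=> f y h.
  have hs : {for y, continuous (fun z : R => z - tau)}.
    by apply: cvgB; [exact: cvg_id | exact: cvg_cst].
  exact: (continuous_comp hs h).
have dv' : forall i k (r : R), 0 < r -> (v i k)^`() r = g r i k.
  by move=> i k r hr; rewrite derive1E (@derive_val _ _ _ _ _ _ _ (dv i k r hr)).
have contg : forall i k (r : R), 0 < r -> g z i k @[z --> r] --> g r i k.
  move=> i k r hr; apply: cvgM; first exact: cvg_cst.
  have hr' : - tau < r - tau by rewrite ltrBrDr addNr.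
  apply: cont_sum => j; apply: cvgM.
    exact: (shift (fun y => P y i j) r (contP _ _ _ hr')).
  apply: cvgB.
    exact: (shift (v j k) r (contv _ _ _ hr')).
  exact: (shift (v i k) r (contv _ _ _ hr')).
have contdv : forall i k (r : R), 0 < r -> (v i k)^`() z @[z --> r] --> (v i k)^`() r.
  move=> i k r hr; rewrite dv' //; apply: (cvg_trans _ (contg i k r hr)).
  apply: near_eq_cvg; near=> z; rewrite dv' //; near: z; exact: lt_nbhsr.
have t0 : 0 < t by apply: lt_trans tt.
have leaf : forall i j k, is_derive t 1 (fun z => (v i k z - v j k z)^+2)
    (2 * (v i k t - v j k t) * (g t i k - g t j k)).
  move=> i j k.
  have H := is_deriveX 2 (is_deriveB (dv i k t t0) (dv j k t t0)).
  apply: is_derive_eq H _.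
  by change ((2 * (v i k t - v j k t) ^+ 1) * (g t i k - g t j k) =
    2 * (v i k t - v j k t) * (g t i k - g t j k)); rewrite expr1.
pose h (i : 'I_N) := \sum_(j < N) \sum_(k < d) (fun z => (v i k z - v j k z)^+2).
have VE : Vfun v = (2^-1 : R) \*: \sum_(i < N) h i.
  apply/funext => y; rewrite /Vfun /h /=.
  rewrite fct_sumE /=; congr (_ * _); apply: eq_bigr => i _.
  rewrite fct_sumE /=; apply: eq_bigr => j _.
  by rewrite fct_sumE /=.
have hVd : is_derive t 1 (Vfun v)
    (2^-1 * \sum_(i < N) \sum_(j < N) \sum_(k < d)
        (2 * (v i k t - v j k t) * (g t i k - g t j k))).
  rewrite VE; exact: is_deriveZ.
split; first exact: (@ex_derive _ _ _ _ _ _ _ hVd).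
rewrite derive1E (@derive_val _ _ _ _ _ _ _ hVd).
have L1 : 2^-1 * \sum_(i < N) \sum_(j < N) \sum_(k < d)
        (2 * (v i k t - v j k t) * (g t i k - g t j k)) =
   \sum_(i < N) \sum_(j < N) \sum_(k < d) (v i k t - v j k t) * (g t i k - g t j k).
  rewrite mulr_sumr; apply: eq_bigr => i _; rewrite mulr_sumr; apply: eq_bigr => j _.
  rewrite mulr_sumr; apply: eq_bigr => k _; by field.
rewrite L1.
have A := @boundA R N d lambda del (P (t - tau)) (fun i k => v i k (t - tau))
   (fun i k => v i k t) (fun i k => g t i k) N1 lam0 del0 (Pb (t - tau)) (Psym (t - tau))
   (fun i k => erefl).
apply: le_trans A _; apply: lerD; first exact: lexx.
set s := t - tau.
have s0 : 0 < s by rewrite subr_gt0.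
have st : s < t by rewrite /s ltrBlDr ltrDl.
have ts : t - s = tau by rewrite /s opprB addrC subrK.
have N0 : 0 < N%:R :> R by rewrite ltr0n.
set I := \int[lebesgue_measure]_(r in `[s, t]) Dtilde psi x v tau r.
have pdv : forall i k, pcont s t (derive1 (v i k)).
  move=> i k r /andP[h1 _]; apply: contdv; exact: lt_le_trans h1.
have pf : forall i k, pcont s t (fun r => ((derive1 (v i k)) r)^+2).
  move=> i k r hr; rewrite expr2; apply: cvgM; exact: pdv.
have pDt : pcont s t (Dtilde psi x v tau).
  move=> r /andP[h1 _]; rewrite /Dtilde; apply: shift; apply: Dcont.
  rewrite ltrBrDr addNr; exact: lt_le_trans h1.
have E1 : \sum_(i < N) \sum_(k < d) (v i k t - v i k s)^+2 <=
     tau * \int[lebesgue_measure]_(r in `[s, t])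
        (\sum_(i < N) \sum_(k < d) ((derive1 (v i k)) r)^+2).
  rewrite Rint_sum; last first.
    move=> i r hr; apply: cont_sum => k; exact: pf.
  rewrite mulr_sumr; apply: ler_sum => i _.
  rewrite Rint_sum; last by move=> k; exact: pf.
  rewrite mulr_sumr; apply: ler_sum => k _.
  rewrite -ts; apply: int_cs => // r /andP[h1 _].
  exact: (@ex_derive _ _ _ _ _ _ _ (dv i k r (lt_le_trans s0 h1))).
have E2 : \int[lebesgue_measure]_(r in `[s, t])
        (\sum_(i < N) \sum_(k < d) ((derive1 (v i k)) r)^+2) <=
     2 * lambda^+2 / N%:R * I.
  rewrite /I -RintegralZl //; last exact: pcont_int.
  apply: le_Rintegral => //.
  - apply: pcont_int => r hr; apply: cont_sum => i; apply: cont_sum => k; exact: pf.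
  - apply: pcont_int => r hr; apply: cvgM; [exact: cvg_cst | exact: pDt].
  - move=> r; rewrite /= in_itv /= => /andP[h1 _].
    have r0 : 0 < r by exact: lt_le_trans h1.
    under eq_bigr do under eq_bigr do rewrite dv' //.
    exact: (@boundB R N d lambda (P (r - tau)) (fun i k => v i k (r - tau)) N1 (Pb (r - tau))).
have E3 := le_trans E1 (ler_wpM2l (ltW tau0) E2).
have c0 : 0 <= lambda * N%:R / del.
  by apply: divr_ge0; [apply: mulr_ge0; exact: ltW | exact: ltW].
apply: le_trans (ler_wpM2l c0 E3) _.
rewrite le_eqVlt; apply/orP; left; apply/eqP.
by field; rewrite ?lt0r_neq0.
Unshelve. all: by end_near.
Qed.
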